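(* Fix $T>0$, $\lambda>0$ and a continuous non-increasing pricing schedule $p:[0,T]\to[0,\infty)$. Let $w:[0,1]\to[0,T]\cup\{\infty\}$ be a regular threshold time function, and suppose all competing buyers use the value-based threshold strategy $\sigma_w(v,\alpha)=\max\{w(v),\alpha\}$. Then for every buyer type $(v,\alpha)\in[0,1]\times[0,T]$ and every $\tau\in[\alpha,T]$, $$\Pi^b(\tau;v,\alpha,\sigma_w,p)=\Pi^b(\tau;v,0,\sigma_w,p)=(v-p(\tau))\,e^{-\lambda\tau(1-w^{-1}(\tau))},$$ where $w^{-1}(t):=\inf\{u\in[0,1]: w(u)\le t\}$ (with $\inf\emptyset=1$).
   Context: Market model: a single item is sold over $[0,T]$. For a buyer of valuation $v\in[0,1]$ and arrival time $\alpha\in[0,T]$ choosing a target purchase time $\tau\in[\alpha,T]$, when the other buyers use a strategy $\sigma:[0,1]\times[0,T]\to[0,T]\cup\{\infty\}$ (with $\sigma(u,a)\ge a$), the interim utility is $$\Pi^b(\tau;v,\alpha,\sigma,p)=\mathbb{E}\Big[(v-p(\tau))\,\mathbb{I}\Big\{\tau<\min_{i\in\{1,\dots,N_-\}}\sigma(v_i,\alpha_i)\Big\}\Big],$$ where the number of competing buyers $N_-$ is Poisson with mean $\lambda T$, and conditional on $N_-$ the competitors' valuations $v_i$ are i.i.d. uniform on $[0,1]$ and their arrival times $\alpha_i$ are i.i.d. uniform on $[0,T]$, all independent (the minimum over an empty set is $\infty$). A threshold time function is a map $w:[0,1]\to[0,T]\cup\{\infty\}$; with $\underline v_w=\inf\{v: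 w(v)<\infty\}$ and $\overline v_w=\sup\{v: w(v)>0\}$, $w$ is regular if: (i) non-increasing on $[0,1]$; (ii) strictly decreasing on $[\underline v_w,\overline v_w]\cap[0,1]$; (iii) continuous on $(\underline v_w,\overline v_w]\cap[0,1]$; (iv) right-differentiable on $[\underline v_w,\overline v_w)\cap[0,1]$. *)

(* Defs.v *)
From mathcomp Require Import all_boot all_order all_algebra.
From mathcomp Require Import all_classical all_reals all_analysis.
Set Implicit Arguments. Unset Strict Implicit. Unset Printing Implicit Defensive.
Import Order.TTheory GRing.Theory Num.Theory.
Import numFieldNormedType.Exports.
Local Open Scope classical_set_scope.
Local Open Scope ring_scope.

Section Market.
Variable R : realType.

(* A strategy maps (valuation, arrival time) to a target time in [0,T] \cup {oo};
   oo is represented by +oo in \bar R. *)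

(* Expectation of F (s) where s is a list of n i.i.d. competitor types (v_i, a_i),
   v_i uniform on [0,1], a_i uniform on [0,T] (independent), written as the
   iterated integral (density 1 on [0,1], 1/T on [0,T]). *)
Fixpoint iid_expect (T : R) (n : nat) (F : seq (R * R) -> R) : R :=
  match n with
  | 0 => F [::]
  | n'.+1 =>
      Rintegral (@lebesgue_measure R) `[0, 1]%classic (fun u =>
        T^-1 * Rintegral (@lebesgue_measure R) `[0, T]%classic (fun a =>
          iid_expect T n' (fun s => F ((u, a) :: s))))
  end.

Definition min_sigma (sigma : R -> R -> \bar R) (s : seq (R * R)) : \bar R :=
  \big[Order.min/+oo%E]_(x <- s) sigma x.1 x.2.

(* Interim utility Pi^b(tau; v, alpha, sigma, p): N_- ~ Poisson(lam * T). *)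
Definition interim_utility (T lam : R) (sigma : R -> R -> \bar R) (p : R -> R)
    (tau v alpha : R) : R :=
  let u : nat -> R := (fun n : nat =>
        expR (- (lam * T)) * (lam * T) ^+ n / (n`!)%:R *
        iid_expect T n (fun s =>
          (v - p tau) * (if (tau%:E < min_sigma sigma s)%E then 1 else 0))) in
  limn (series u).

Definition sigma_thr (w : R -> \bar R) : R -> R -> \bar R :=
  fun u a => Order.max (w u) a%:E.

Definition vlow (w : R -> \bar R) : \bar R :=
  ereal_inf [set x%:E | x in [set v | 0 <= v <= 1 /\ (w v < +oo)%E]].
Definition vhigh (w : R -> \bar R) : \bar R :=
  ereal_sup [set x%:E | x in [set v | 0 <= v <= 1 /\ (0 < w v)%E]].

Definition right_differentiable_at (f : R -> \bar R) (x : R) : Prop :=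
  f x \is a fin_num /\
  exists d : R, (fun h : R => (fine (f (x + h)) - fine (f x)) / h) @ 0^'+ --> d.

Definition regular (w : R -> \bar R) : Prop :=
  [/\ (forall x y, 0 <= x -> x <= y -> y <= 1 -> (w y <= w x)%E),
      (forall x y, 0 <= x -> y <= 1 -> (vlow w <= x%:E)%E -> (y%:E <= vhigh w)%E ->
          x < y -> (w y < w x)%E),
      {within [set x | 0 <= x <= 1 /\ (vlow w < x%:E)%E /\ (x%:E <= vhigh w)%E],
         continuous w} &
      (forall x, 0 <= x <= 1 -> (vlow w <= x%:E)%E -> (x%:E < vhigh w)%E ->
          right_differentiable_at w x)].

Definition winv (w : R -> \bar R) (t : R) : R :=
  let S := [set u | 0 <= u <= 1 /\ (w u <= t%:E)%E] in
  if `[< S = set0 >] then 1 else inf S.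

End Market.

(* Main.v *)
Require Import Defs.
From mathcomp Require Import all_boot all_order all_algebra.
From mathcomp Require Import all_classical all_reals all_analysis.
From mathcomp Require Import ring lra.
Import Order.TTheory GRing.Theory Num.Theory.
Import numFieldNormedType.Exports.
Local Open Scope classical_set_scope.
Local Open Scope ring_scope.

Section S.


Variable R : realType.
Notation mu := (@lebesgue_measure R).
Lemma winv_spec (w : R -> \bar R) (tau : R) :
  (forall x y, 0 <= x -> x <= y -> y <= 1 -> (w y <= w x)%E) ->
  [/\ 0 <= winv w tau <= 1,
   (forall u, 0 <= u <= 1 -> u < winv w tau -> (tau%:E < w u)%E) &
   (forall u, 0 <= u <= 1 -> winv w tau < u -> (w u <= tau%:E)%E)].
Proof.
move=> mono; rewrite /winv.
set S := [set u | 0 <= u <= 1 /\ (w u <= tau%:E)%E].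
case: (asboolP (S = set0)) => [S0|Sn0].
  split; first by rewrite ler01 lexx.
  - move=> u u01 _; rewrite ltNge; apply/negP => wu.
    have : S u by split.
    by rewrite S0.
  - by move=> u /andP[_ u1]; rewrite ltNge u1.
have [s Ss] : S !=set0 by apply/set0P/eqP.
have lb0 : lbound S 0 by move=> x [/andP[]].
have hl : has_lbound S by exists 0.
have inf0 : 0 <= inf S by apply: lb_le_inf => //; exists s.
split.
- rewrite inf0 /=; apply: le_trans (ge_inf hl Ss) _.
  by case: Ss => /andP[].
- move=> u u01 ulti; rewrite ltNge; apply/negP => wu.
  have Su : S u by split.
  by move: (ge_inf hl Su); rewrite leNgt ulti.
- move=> u /andP[u0 u1] iu.
  have [y Sy yu] := inf_lt (ex_intro _ s Ss) iu.
  case: Sy => /andP[y0 y1] wy.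
  apply: le_trans wy; apply: mono => //; exact: ltW.
Qed.

Lemma Rint_patch (D P : set R) (c : R) : measurable P -> P `<=` D ->
  Rintegral mu D (fun x => if x \in P then c else 0) = c * fine (mu P).
Proof.
move=> mP PD.
have -> : (fun x => if x \in P then c else 0) = (cst c) \_ P by [].
by rewrite -Rintegral_mkcondr (setIidr PD) Rintegral_cst.
Qed.

Lemma int_patch (D P : set R) (c : R) : measurable P -> measurable D -> P `<=` D ->
  (mu P < +oo)%E ->
  mu.-integrable D (EFin \o (fun x => if x \in P then c else 0)).
Proof.
move=> mP mD PD Pfin.
have -> : (fun x => if x \in P then c else 0) = (cst c) \_ P by [].
rewrite -restrict_EFin; apply/integrable_restrict => //.
rewrite ?(setIidl PD) ?(setIidr PD) ?(setIidl PD).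
apply: measurable_bounded_integrable => //.
exact: bounded_cst.
Qed.
Lemma mu_cc (a b : R) : a <= b -> fine (mu `[a, b]%classic) = b - a.
Proof.
move=> ab; have := lebesgue_measure_itv `[a, b]; rewrite /= lte_fin => ->.
case: ltP => //= ba; have -> : b = a by apply/eqP; rewrite eq_le ba ab.
by rewrite subrr.
Qed.

Lemma mu_co (a b : R) : a <= b -> fine (mu `[a, b[%classic) = b - a.
Proof.
move=> ab; have := lebesgue_measure_itv `[a, b[; rewrite /= lte_fin => ->.
case: ltP => //= ba; have -> : b = a by apply/eqP; rewrite eq_le ba ab.
by rewrite subrr.
Qed.

Lemma mu_oc (a b : R) : a <= b -> fine (mu `]a, b]%classic) = b - a.
Proof.
move=> ab; have := lebesgue_measure_itv `]a, b]; rewrite /= lte_fin => ->.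
case: ltP => //= ba; have -> : b = a by apply/eqP; rewrite eq_le ba ab.
by rewrite subrr.
Qed.

Definition hh (w : R -> \bar R) (tau : R) (x : R * R) : R :=
  if (tau%:E < sigma_thr w x.1 x.2)%E then 1 else 0.

Lemma inner (w : R -> \bar R) (tau T c u : R) : 0 <= tau <= T ->
  Rintegral mu `[0, T]%classic (fun a => c * hh w tau (u, a))
  = c * (if (tau%:E < w u)%E then T else T - tau).
Proof.
move=> /andP[t0 tT].
rewrite /hh /sigma_thr /=.
case: ifP => twu.
  rewrite (@eq_Rintegral _ _ _ mu _ (fun _ => c)); last first.
    by move=> a _; rewrite lt_max twu mulr1.
  by rewrite Rintegral_cst // mu_cc ?subr0 // (le_trans t0).
rewrite (@eq_Rintegral _ _ _ mu _ (fun a => if a \in `]tau, T]%classic then c else 0)).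
  rewrite Rint_patch // ?mu_oc //.
  by apply: subset_itvr; rewrite bnd_simp.
move=> a; rewrite mem_setE in_itv /= => /andP[a0 aT].
rewrite lt_max twu /= lte_fin mem_setE in_itv /= aT andbT.
by case: ifP; rewrite ?mulr1 ?mulr0.
Qed.

Lemma mu_fin (i : interval R) : (mu [set` i] < +oo)%E ->  (mu [set` i] < +oo)%E.
Proof. by []. Qed.

Lemma outer (w : R -> \bar R) (tau T c : R) : 0 < T -> 0 <= tau <= T ->
  (forall x y, 0 <= x -> x <= y -> y <= 1 -> (w y <= w x)%E) ->
  Rintegral mu `[0, 1]%classic
    (fun u => T^-1 * (c * (if (tau%:E < w u)%E then T else T - tau)))
  = c * (1 - tau / T * (1 - winv w tau)).
Proof.
move=> T0 /andP[t0 tT] mono.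
have [/andP[m0 m1] lt gt] := @winv_spec w tau mono.
set m := winv w tau in m0 m1 lt gt *.
have [P [mP PD muP Pfin HP]] : exists P : set R, [/\ measurable P, P `<=` `[0, 1]%classic,
    fine (mu P) = m, (mu P < +oo)%E &
    forall u, 0 <= u <= 1 -> (tau%:E < w u)%E = (u \in P)].
  case: (boolP (tau%:E < w m)%E) => twm.
  - exists `[0, m]%classic; split => //.
    + by apply: subset_itvl; rewrite bnd_simp.
    + by rewrite mu_cc // subr0.
    + by rewrite lebesgue_measure_itv; case: ifP => // _; rewrite ltry.
    + move=> u /andP[u0 u1]; rewrite mem_setE in_itv /= u0 /=.
      case: (ltgtP u m) => [um|mu'|->]; [by rewrite lt // u0 u1| |by []].
      by apply/negbTE; rewrite -leNgt gt // u0 u1.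
  - exists `[0, m[%classic; split => //.
    + by apply: subset_itvl; rewrite bnd_simp.
    + by rewrite mu_co // subr0.
    + by rewrite lebesgue_measure_itv; case: ifP => // _; rewrite ltry.
    + move=> u /andP[u0 u1]; rewrite mem_setE in_itv /= u0 /=.
      case: (ltgtP u m) => [um|mu'|->]; [by rewrite lt // u0 u1| |by apply/negbTE].
      by apply/negbTE; rewrite -leNgt gt // u0 u1.
have TN0 : T != 0 by rewrite gt_eqF.
rewrite (@eq_Rintegral _ _ _ mu _ (fun u =>
   (if u \in `[0, 1]%classic then c * (T - tau) / T else 0) +
   (if u \in P then c * tau / T else 0))); last first.
  move=> u uD; rewrite uD.
  have := uD; rewrite mem_setE in_itv /= => u01.
  rewrite -HP //; case: ifP => _; field => //.
rewrite RintegralD //.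
- rewrite !Rint_patch // mu_cc ?ler01 // muP; field => //.
- apply: int_patch => //.
  by rewrite lebesgue_measure_itv; case: ifP => // _; rewrite ltry.
- exact: int_patch.
Qed.

Lemma ind_prod (w : R -> \bar R) (tau : R) (s : seq (R * R)) :
  (if (tau%:E < min_sigma (sigma_thr w) s)%E then 1 else 0)
  = \prod_(x <- s) hh w tau x.
Proof.
elim: s => [|x s IH]; first by rewrite /min_sigma !big_nil ltry.
rewrite big_cons -IH /min_sigma big_cons lt_min /hh.
by case: (tau%:E < _)%E; case: (tau%:E < _)%E; rewrite ?mulr1 ?mulr0 ?mul0r.
Qed.

Lemma iid_prod (w : R -> \bar R) (tau T : R) : 0 < T -> 0 <= tau <= T ->
  (forall x y, 0 <= x -> x <= y -> y <= 1 -> (w y <= w x)%E) ->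
  forall n K, iid_expect T n (fun s => K * \prod_(x <- s) hh w tau x)
   = K * (1 - tau / T * (1 - winv w tau)) ^+ n.
Proof.
move=> T0 tT mono; elim => [|n IH] K /=; first by rewrite big_nil expr0.
set q := (1 - tau / T * (1 - winv w tau)).
have E : forall u a, iid_expect T n (fun s => K * \prod_(x <- (u, a) :: s) hh w tau x)
    = (K * q ^+ n) * hh w tau (u, a).
  move=> u a.
  have -> : (fun s => K * \prod_(x <- (u, a) :: s) hh w tau x)
          = (fun s => (K * hh w tau (u, a)) * \prod_(x <- s) hh w tau x).
    by apply/funext => s; rewrite big_cons mulrA.
  by rewrite IH -/q mulrAC.
have -> : (fun u => T^-1 * Rintegral mu `[0, T]%classic
      (fun a => iid_expect T n (fun s => K * \prod_(x <- (u, a) :: s) hh w tau x)))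
  = (fun u => T^-1 * ((K * q ^+ n) * (if (tau%:E < w u)%E then T else T - tau))).
  apply/funext => u; rewrite -inner //; congr (_ * _).
  by congr Rintegral; apply/funext => a; rewrite E.
by rewrite outer // exprS -/q mulrA mulrAC.
Qed.
End S.
Arguments hh {R}.

Theorem proposition2 (R : realType) (T lam : R) (p : R -> R) (w : R -> \bar R) :
  0 < T -> 0 < lam ->
  {within `[0, T]%classic, continuous p} ->
  (forall x y, 0 <= x -> x <= y -> y <= T -> p y <= p x) ->
  (forall x, 0 <= x <= T -> 0 <= p x) ->
  (forall u, 0 <= u <= 1 -> (0 <= w u)%E /\ ((w u <= T%:E)%E \/ w u = +oo%E)) ->
  regular w ->
  forall v alpha tau : R, 0 <= v <= 1 -> 0 <= alpha <= T -> alpha <= tau <= T ->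
    interim_utility T lam (sigma_thr w) p tau v alpha
      = interim_utility T lam (sigma_thr w) p tau v 0 /\
    interim_utility T lam (sigma_thr w) p tau v 0
      = (v - p tau) * expR (- lam * tau * (1 - winv w tau)).
Proof.
move=> T0 l0 _ _ _ _ [mono _ _ _] v alpha tau _ /andP[a0 _] /andP[aT tT].
split; first by [].
have tT' : 0 <= tau <= T by rewrite tT (le_trans a0 aT).
rewrite /interim_utility.
set q := (1 - tau / T * (1 - winv w tau)).
set C := expR (- (lam * T)) * (v - p tau).
have -> : (fun n : nat => expR (- (lam * T)) * (lam * T) ^+ n / (n`!)%:R *
        iid_expect T n (fun s =>
          (v - p tau) * (if (tau%:E < min_sigma (sigma_thr w) s)%E then 1 else 0)))
   = (fun n => C * exp_coeff (lam * T * q) n).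
  apply/funext => n.
  have -> : (fun s =>
          (v - p tau) * (if (tau%:E < min_sigma (sigma_thr w) s)%E then 1 else 0))
     = (fun s => (v - p tau) * \prod_(x <- s) hh w tau x).
    by apply/funext => s; rewrite ind_prod.
  rewrite iid_prod // /exp_coeff /= /C -/q !exprMn; clearbody q; ring.
have -> : series (fun n => C * exp_coeff (lam * T * q) n)
   = (fun n => C * series (exp_coeff (lam * T * q)) n).
  by apply/funext => n; rewrite /series /= mulr_sumr.
rewrite (cvg_lim _ (cvgMl_tmp (is_cvg_series_exp_coeff (lam * T * q)))) //.
rewrite -/(expR _) /C mulrAC -expRD mulrC; congr (_ * expR _).
rewrite /q; field; by rewrite gt_eqF.
Qed.
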